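(* Let $P$ be a finite graded poset with a unique minimum $\hat{0}$ and a unique maximum $\hat{1}$, endowed with its rank function $\operatorname{rk}$, and let $H=\operatorname{rk}(\hat{1})$. Let $X_P(y)=\sum_{p\in P}\mu(\hat{0},p)\,y^{H-\operatorname{rk}(p)}$ be the characteristic polynomial of $P$, where $\mu$ is the Möbius function of $P$. Then no coefficient of the $q$-Zeta polynomial $\mathsf{Z}_{P,\operatorname{rk}}(x)\in\mathbb{Q}(q)[x]$ has a pole at $q=0$, and the polynomial $\mathsf{Z}_{P,\operatorname{rk}}|_{q=0}(x)$ obtained by setting $q=0$ in its coefficients satisfies $$\mathsf{Z}_{P,\operatorname{rk}}|_{q=0}(1-y)=y^{H}X_P(1/y).$$
   Context: $q$ is an indeterminate; for $n\in\mathbb{Z}$, $[n]_q=(q^n-1)/(q-1)$, and $[n]!_q=[1]_q[2]_q\cdots[n]_q$ for $n\ge 0$. For a finite poset $P$, a height function is a map $h:P\to\mathbb{N}$ with $h(x)<h(y)$ whenever $y$ covers $x$. A poset is graded if it has a height function increasing by exactly $1$ along every cover relation; $\operatorname{rk}$ denotes such a height function with minimum value $0$ on each connected component. For $k\ge1$, $\operatorname{Ch}_k(P)$ is the set of strict chains $c_1<\cdots<c_k$ in $P$. For a tuple $a=(a_1,\dots,a_k)$ of distinct nonnegative integers, $\mathsf{E}_a\in\mathbb{Q}(q)[x]$ is the unique polynomial with $\mathsf{E}_a([n]_q)=\sum_{m\in\mathbb{N}^k,\ m_1+\cdots+m_k=n}q^{a_1m_1+\cdots+a_km_k}$ for all $n\ge0$.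 The $q$-Zeta polynomial of $(P,h)$ is $$\mathsf{Z}_{P,h}(x)=\sum_{k\ge1}\sum_{c\in\operatorname{Ch}_k(P)}q^{h(c_1)+\cdots+h(c_k)}\,\mathsf{E}_{(h(c_1),\dots,h(c_k))}\!\left(\frac{x-[k+1]_q}{q^{k+1}}\right)\in\mathbb{Q}(q)[x];$$ it is the unique polynomial such that $\mathsf{Z}_{P,h}([n]_q)=\sum_{e_1\le e_2\le\cdots\le e_{n-1}\text{ in }P}q^{h(e_1)+\cdots+h(e_{n-1})}$ for all integers $n\ge2$. *)

(* Defs.v *)
From HB Require Import structures.
From mathcomp Require Import all_boot all_order all_algebra.
From mathcomp Require Import fraction.
Set Implicit Arguments. Unset Strict Implicit. Unset Printing Implicit Defensive.
Import Order.TTheory GRing.Theory Num.Theory.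
Local Open Scope ring_scope.

Definition covers d (P : finPOrderType d) (x y : P) : bool :=
  (x < y)%O && [forall z : P, ~~ ((x < z)%O && (z < y)%O)].

Definition is_rank_function d (P : finTBPOrderType d) (rk : P -> nat) : Prop :=
  rk (\bot)%O = 0%N /\ (forall x y : P, covers x y -> rk y = (rk x).+1).

Definition graded d (P : finTBPOrderType d) : Prop :=
  exists rk : P -> nat, is_rank_function rk.

(* The fuel #|P| is sufficient since every strict chain in P has
   at most #|P| elements. *)
Fixpoint mobius_fuel d (P : finPOrderType d) (n : nat) (x y : P) : int :=
  match n with
  | 0 => 0
  | n'.+1 =>
      if x == y then 1
      else if (x < y)%O then
        - \sum_(z : P | (x <= z)%O && (z < y)%O) mobius_fuel n' x z
      else 0
  end.

Definition mobius d (P : finPOrderType d) (x y : P) : int :=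
  mobius_fuel #|P| x y.

Definition charpoly_poset d (P : finTBPOrderType d) (rk : P -> nat)
  : {poly rat} :=
  \sum_(p : P) ((mobius (\bot)%O p)%:~R *: 'X^(rk (\top)%O - rk p)).

Definition Qq := {fraction {poly rat}}.

Definition tofracQ (p : {poly rat}) : Qq := @FracField.tofrac _ p.

Definition qvar : Qq := tofracQ 'X.

Definition qint (n : nat) : Qq := (qvar ^+ n - 1) / (qvar - 1).

Definition multichain d (P : porderType d) k (e : {ffun 'I_k -> P}) : bool :=
  [forall i : 'I_k, forall j : 'I_k, (i <= j)%N ==> (e i <= e j)%O].

Definition is_qZeta d (P : finPOrderType d) (h : P -> nat) (Z : {poly Qq})
  : Prop :=
  forall n : nat, (2 <= n)%N ->
    Z.[qint n] =
    \sum_(e : {ffun 'I_n.-1 -> P} | multichain e)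
       qvar ^+ (\sum_(i < n.-1) h (e i)).

Definition value_at_q0 (c : Qq) (v : rat) : Prop :=
  exists a b : {poly rat},
    b.[0] != 0 /\ c = tofracQ a / tofracQ b /\ v = a.[0] / b.[0].

Definition no_pole_at_q0 (c : Qq) : Prop := exists v : rat, value_at_q0 c v.

(* Main.v *)
Require Import Defs.
From HB Require Import structures.
From mathcomp Require Import all_boot all_order all_algebra.
From mathcomp Require Import fraction.
Import Order.TTheory GRing.Theory Num.Theory.
Local Open Scope ring_scope.

Lemma tofracQ_inj (a b : {poly rat}) : tofracQ a = tofracQ b -> a = b.
Proof. by move=> h; apply/eqP; rewrite -tofrac_eq; apply/eqP. Qed.

Lemma tofracQ_eq0 (a : {poly rat}) : (tofracQ a == 0) = (a == 0).
Proof. exact: tofrac_eq0. Qed.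

Lemma loc_poly (a : {poly rat}) : value_at_q0 (tofracQ a) a.[0].
Proof.
exists a, 1; split; first by rewrite hornerC oner_neq0.
by rewrite /tofracQ tofrac1 divr1 hornerC divr1.
Qed.

Lemma fracD (F : fieldType) (a b a' b' : F) : b != 0 -> b' != 0 ->
  (a * b' + a' * b) / (b * b') = a / b + a' / b'.
Proof.
move=> h h'; rewrite mulrDl; congr (_ + _).
  by rewrite invfM mulrACA divff // mulr1.
by rewrite [b * b']mulrC invfM mulrACA divff // mulr1.
Qed.

Lemma fracM (F : fieldType) (a b a' b' : F) : b != 0 -> b' != 0 ->
  (a * a') / (b * b') = a / b * (a' / b').
Proof. by move=> h h'; rewrite invfM mulrACA. Qed.

Lemma tofracQD a b : tofracQ (a + b) = tofracQ a + tofracQ b.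
Proof. by rewrite /tofracQ rmorphD. Qed.
Lemma tofracQM a b : tofracQ (a * b) = tofracQ a * tofracQ b.
Proof. by rewrite /tofracQ rmorphM. Qed.

Lemma loc_add {c v c' v'} : value_at_q0 c v -> value_at_q0 c' v' ->
  value_at_q0 (c + c') (v + v').
Proof.
move=> [a [b [b0 [-> ->]]]] [a' [b' [b0' [-> ->]]]].
exists (a * b' + a' * b), (b * b'); split; first by rewrite hornerM mulf_neq0.
have hb : tofracQ b != 0 by rewrite tofracQ_eq0; apply: contra b0 => /eqP ->; rewrite horner0.
have hb' : tofracQ b' != 0 by rewrite tofracQ_eq0; apply: contra b0' => /eqP ->; rewrite horner0.
split; first by rewrite tofracQD !tofracQM (@fracD _ _ _ _ _ hb hb').
by rewrite hornerD !hornerM (@fracD _ _ _ _ _ b0 b0').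
Qed.

Lemma loc_mul {c v c' v'} : value_at_q0 c v -> value_at_q0 c' v' ->
  value_at_q0 (c * c') (v * v').
Proof.
move=> [a [b [b0 [-> ->]]]] [a' [b' [b0' [-> ->]]]].
exists (a * a'), (b * b'); split; first by rewrite hornerM mulf_neq0.
split; first by rewrite !tofracQM invfM mulrACA.
by rewrite !hornerM invfM mulrACA.
Qed.

Lemma loc_inv {c v} : value_at_q0 c v -> v != 0 -> value_at_q0 c^-1 v^-1.
Proof.
move=> [a [b [b0 [-> ->]]]] hv.
have a0 : a.[0] != 0 by apply: contra hv => /eqP ->; rewrite mul0r.
exists b, a; split => //.
have ha : tofracQ a != 0 by rewrite tofracQ_eq0; apply: contra a0 => /eqP ->; rewrite horner0.
have hb : tofracQ b != 0 by rewrite tofracQ_eq0; apply: contra b0 => /eqP ->; rewrite horner0.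
by split; rewrite invf_div.
Qed.

Lemma loc_const (r : rat) : value_at_q0 (tofracQ r%:P) r.
Proof. by have := loc_poly r%:P; rewrite hornerC. Qed.

Lemma loc_nat (n : nat) : value_at_q0 n%:R n%:R.
Proof. by have := loc_const n%:R; rewrite /tofracQ !rmorph_nat. Qed.

Lemma loc_int (n : int) : value_at_q0 n%:~R n%:~R.
Proof. by have := loc_const n%:~R; rewrite /tofracQ !rmorph_int. Qed.

Lemma loc_opp {c v} : value_at_q0 c v -> value_at_q0 (- c) (- v).
Proof.
move=> h; have := loc_mul (loc_int (-1)) h.
by rewrite !mulrN1z !mulN1r.
Qed.

Lemma loc_sum (I : Type) (r : seq I) (Pr : pred I) (F : I -> Qq) (G : I -> rat) :
  (forall i, Pr i -> value_at_q0 (F i) (G i)) ->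
  value_at_q0 (\sum_(i <- r | Pr i) F i) (\sum_(i <- r | Pr i) G i).
Proof.
move=> h; elim/big_rec2: _ => [|i x y Pi hxy]; first by have := loc_nat 0.
exact: loc_add (h _ Pi) hxy.
Qed.

Lemma loc_qX (k : nat) : value_at_q0 (qvar ^+ k) ((k == 0%N)%:R).
Proof.
by have := loc_poly ('X ^+ k); rewrite /qvar /tofracQ tofracXn hornerXn expr0n.
Qed.

Lemma qX_neq1 {k : nat} : (0 < k)%N -> qvar ^+ k != 1.
Proof.
move=> hk; rewrite /qvar /tofracQ -tofracXn -tofrac1 tofrac_eq.
apply/eqP => /(congr1 (size : {poly rat} -> nat)).
by rewrite size_polyXn size_poly1; case: k hk.
Qed.

Lemma qX_inj (m n : nat) : qvar ^+ m = qvar ^+ n -> m = n.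
Proof.
rewrite /qvar /tofracQ -!tofracXn => /tofracQ_inj /(congr1 (size : {poly rat} -> nat)).
by rewrite !size_polyXn => -[].
Qed.

Lemma q_neq1 : qvar - 1 != 0.
Proof. by rewrite subr_eq0; have := qX_neq1 (isT : (0 < 1)%N); rewrite expr1. Qed.

Lemma loc_unit (k : nat) : (0 < k)%N -> value_at_q0 (1 - qvar ^+ k)^-1 1.
Proof.
move=> hk; rewrite -[1 in X in value_at_q0 _ X]invr1.
apply: loc_inv; last exact: oner_neq0.
have := loc_add (loc_nat 1) (loc_opp (loc_qX k)).
by case: k hk => // k _; rewrite /= subr0.
Qed.
Set Implicit Arguments.

Section Poset.
Variables (d : Order.disp_t) (P : finTBPOrderType d) (rk : P -> nat).
Hypothesis hrk : is_rank_function rk.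

Definition below (x : P) := #|[set z : P | (z <= x)%O]|.

Lemma below_lt {w x : P} : (w < x)%O -> (below w < below x)%N.
Proof.
move=> wx; apply: proper_card; apply/properP; split.
  by apply/subsetP => z; rewrite !inE => zw; apply: le_trans zw (ltW wx).
by exists x; rewrite !inE ?lexx ?(lt_geF wx).
Qed.

Lemma exists_cover {y x : P} : (y < x)%O -> exists w, (y <= w)%O /\ (w < x)%O /\ covers w x.
Proof.
move=> yx.
pose Pr := (fun w => (y <= w)%O && (w < x)%O).
have Py : Pr y by rewrite /Pr lexx yx.
case: (@arg_maxnP _ y Pr below Py) => w /andP [yw wx] hmax.
exists w; split => //; split => //; rewrite /covers wx /=.
apply/forallP => z; apply/negP => /andP [wz zx].
have := hmax z; rewrite /Pr (le_trans yw (ltW wz)) zx => /(_ isT).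
by rewrite /= leqNgt below_lt.
Qed.

Lemma rk_mono_aux n : forall x : P, below x = n ->
  forall y, ((y <= x)%O -> (rk y <= rk x)%N) /\ ((y < x)%O -> (rk y < rk x)%N).
Proof.
elim: n {-2}n (leqnn n) => [|N IH] n.
  by rewrite leqn0 => /eqP -> x; rewrite /below (cardD1 x) inE lexx.
move=> hn x hx y.
have hlt : (y < x)%O -> (rk y < rk x)%N.
  move=> yx; case: (exists_cover yx) => w [yw [wx cwx]].
  rewrite (proj2 hrk _ _ cwx) ltnS.
  have hb : (below w <= N)%N by rewrite -ltnS; apply: leq_trans (below_lt wx) _; rewrite hx.
  exact: (proj1 (IH _ hb w erefl y) yw).
split => //; rewrite le_eqVlt => /orP [/eqP -> // | /hlt /ltnW //].
Qed.

Lemma rk_le {x y : P} : (y <= x)%O -> (rk y <= rk x)%N.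
Proof. exact: (proj1 (rk_mono_aux erefl y)). Qed.

Lemma rk_lt {x y : P} : (y < x)%O -> (rk y < rk x)%N.
Proof. exact: (proj2 (rk_mono_aux erefl y)). Qed.

Lemma rk_bot : rk (\bot)%O = 0%N.
Proof. exact: (proj1 hrk). Qed.

Lemma rk_below_aux n : forall x : P, below x = n -> (rk x < below x)%N.
Proof.
elim: n {-2}n (leqnn n) => [|N IH] n.
  by rewrite leqn0 => /eqP -> x; rewrite /below (cardD1 x) inE lexx.
move=> hn x hx.
case: (eqVneq x \bot%O) => [->|xb].
  by rewrite rk_bot /below (cardD1 \bot%O) inE lexx.
have bx : (\bot < x)%O by rewrite lt_neqAle eq_sym xb le0x.
case: (exists_cover bx) => w [_ [wx cwx]].
rewrite (proj2 hrk _ _ cwx).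
have hb : (below w <= N)%N by rewrite -ltnS; apply: leq_trans (below_lt wx) _; rewrite hx.
exact: leq_ltn_trans (IH _ hb w erefl) (below_lt wx).
Qed.

Lemma rk_card (x : P) : (rk x < #|P|)%N.
Proof.
apply: leq_trans (rk_below_aux erefl) _; rewrite /below.
exact: max_card.
Qed.

Lemma rk_top (x : P) : (rk x <= rk (\top)%O)%N.
Proof. exact: rk_le (lex1 x). Qed.


Definition M (p : P) : int := mobius (\bot)%O p.

Lemma mob_stable1 n (z : P) : (rk z < n)%N ->
  mobius_fuel n (\bot)%O z = mobius_fuel n.+1 (\bot)%O z.
Proof.
elim: n z => [//|n IH] z hz /=.
case: eqP => // _; case: ifP => // _; congr (- _); apply: eq_bigr => w /andP [_ wz].
by apply: IH; apply: leq_trans (rk_lt wz) _.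
Qed.

Lemma mob_stable n m (z : P) : (rk z < n)%N -> (n <= m)%N ->
  mobius_fuel n (\bot)%O z = mobius_fuel m (\bot)%O z.
Proof.
move=> hz; elim: m => [|m IH]; first by rewrite leqn0 => /eqP ->.
rewrite leq_eqVlt => /orP [/eqP -> //|]; rewrite ltnS => hnm.
by rewrite IH //; apply: mob_stable1; apply: leq_trans hz hnm.
Qed.

Lemma mob_bot : M (\bot)%O = 1.
Proof.
rewrite /M /mobius; have := rk_card (\bot)%O.
by case: #|P| => [//|n] _ /=; rewrite eqxx.
Qed.

Lemma mob_rec (z : P) : z != (\bot)%O ->
  M z = - \sum_(w : P | (w < z)%O) M w.
Proof.
move=> zb; rewrite /M /mobius; have := rk_card z.
have bz : (\bot < z)%O by rewrite lt_neqAle eq_sym zb le0x.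
case hP: #|P| => [//|n] hz /=; rewrite eq_sym (negbTE zb) bz.
congr (- _); apply: eq_big => [w|w wz]; first by rewrite le0x.
by apply: mob_stable1; case/andP: wz => _ wz; apply: leq_trans (rk_lt wz) _; rewrite -ltnS.
Qed.

Lemma mob_sum (z : P) : z != (\bot)%O -> \sum_(w : P | (w <= z)%O) M w = 0.
Proof.
move=> zb; rewrite (bigD1 z) //= mob_rec // addrC.
apply/eqP; rewrite subr_eq0; apply/eqP; apply: eq_bigl => w.
by rewrite lt_neqAle andbC.
Qed.


Definition Hh := rk (\top)%O.

Fixpoint gam (n : nat) (x : P) (j : nat) : Qq :=
  match n with
  | 0 => 0
  | n'.+1 =>
    let A i := (\sum_(y : P | (y < x)%O) qvar ^+ (rk y - i) * gam n' y i)
                 / (1 - qvar ^+ (rk x - i)) in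
    if x == (\bot)%O then (j == 0%N)%:R else
    if (j < rk x)%N then A j else
    if j == rk x then - \sum_(0 <= i < rk x) A i else 0
  end.

Lemma gam_stable1 n (x : P) j : (rk x < n)%N -> gam n x j = gam n.+1 x j.
Proof.
elim: n x j => [//|n IH] x j hx /=.
have hA : forall i, (\sum_(y : P | (y < x)%O) qvar ^+ (rk y - i) * gam n y i) =
                    (\sum_(y : P | (y < x)%O) qvar ^+ (rk y - i) * gam n.+1 y i).
  move=> i; apply: eq_bigr => y yx; rewrite IH //.
  by apply: leq_trans (rk_lt yx) _; rewrite -ltnS.
case: eqP => // _; rewrite hA; case: ifP => // _; case: ifP => // _.
by congr (- _); apply: eq_bigr => i _; rewrite hA.
Qed.

Definition Gm (x : P) (j : nat) : Qq := gam Hh.+1 x j.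

Definition Af (x : P) (i : nat) : Qq :=
  (\sum_(y : P | (y < x)%O) qvar ^+ (rk y - i) * Gm y i) / (1 - qvar ^+ (rk x - i)).

Lemma Gm_bot j : Gm (\bot)%O j = (j == 0%N)%:R.
Proof. by rewrite /Gm /= eqxx. Qed.

Lemma Gm_eq (x : P) j : x != (\bot)%O ->
  Gm x j = if (j < rk x)%N then Af x j else
           if j == rk x then - \sum_(0 <= i < rk x) Af x i else 0.
Proof.
move=> xb; rewrite /Gm /= (negbTE xb).
have hA : forall i, (\sum_(y : P | (y < x)%O) qvar ^+ (rk y - i) * gam Hh y i) =
                    (\sum_(y : P | (y < x)%O) qvar ^+ (rk y - i) * gam Hh.+1 y i).
  move=> i; apply: eq_bigr => y yx; rewrite gam_stable1 //.
  by apply: leq_trans (rk_lt yx) _; apply: rk_top.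
rewrite /Af; case: ifP => _; first by rewrite hA.
by case: ifP => // _; congr (- _); apply: eq_bigr => i _; rewrite hA.
Qed.

Lemma rk_pos (x : P) : x != (\bot)%O -> (0 < rk x)%N.
Proof.
move=> xb; rewrite -rk_bot; apply: rk_lt.
by rewrite lt_neqAle eq_sym xb le0x.
Qed.

Lemma Gm_big (x : P) j : (rk x < j)%N -> Gm x j = 0.
Proof.
case: (eqVneq x (\bot)%O) => [->|xb]; first by rewrite rk_bot Gm_bot; case: j.
move=> hj; rewrite Gm_eq // ltnNge (ltnW hj) /=.
by rewrite eq_sym (ltn_eqF hj).
Qed.

Lemma fieldAux (F : fieldType) (a S c : F) : c != 1 ->
  a * (S / (1 - c)) = a * c * (S / (1 - c)) + a * S.
Proof.
move=> hc; have h1 : 1 - c != 0 by rewrite subr_eq0 eq_sym.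
rewrite -mulrA -mulrDr; congr (_ * _).
set X := S / (1 - c).
have -> : S = X * (1 - c) by rewrite /X divfK.
by rewrite mulrBr mulr1 [c * _]mulrC addrC subrK.
Qed.

Lemma sum_shift (x : P) j :
  \sum_(y : P | (y < x)%O) qvar ^+ rk y * Gm y j =
  qvar ^+ j * \sum_(y : P | (y < x)%O) qvar ^+ (rk y - j) * Gm y j.
Proof.
rewrite mulr_sumr; apply: eq_bigr => y _.
case: (leqP j (rk y)) => hj; first by rewrite mulrA -exprD subnKC.
by rewrite Gm_big // !mulr0.
Qed.

Lemma Gm_rec (x : P) j :
  qvar ^+ j * Gm x j = \sum_(y : P | (y <= x)%O) qvar ^+ rk y * Gm y j.
Proof.
case: (eqVneq x (\bot)%O) => [->|xb].
  rewrite (bigD1 (\bot)%O) //= big1 ?addr0 ?rk_bot ?Gm_bot.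
    by case: j => [|j]; rewrite ?expr0 ?mulr0 ?mul1r.
  by move=> y /andP [yb ny]; rewrite lex0 in yb; rewrite yb in ny.
rewrite (bigD1 x) //=.
have -> : \sum_(y | (y <= x)%O && (y != x)) qvar ^+ rk y * Gm y j =
          \sum_(y : P | (y < x)%O) qvar ^+ rk y * Gm y j.
  by apply: eq_bigl => y; rewrite lt_neqAle andbC.
case: (ltngtP j (rk x)) => hj.
- rewrite sum_shift Gm_eq // hj /Af.
  have -> : qvar ^+ rk x = qvar ^+ j * qvar ^+ (rk x - j) by rewrite -exprD subnKC // ltnW.
  apply: fieldAux; apply: qX_neq1; by rewrite subn_gt0.
- rewrite !Gm_big // ?mulr0 big1 ?addr0 // => y yx.
  by rewrite Gm_big ?mulr0 //; apply: leq_trans (rk_lt yx) _; apply: ltnW.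
- rewrite hj big1 ?addr0 // => y yx.
  by rewrite Gm_big ?mulr0 //; apply: rk_lt.
Qed.

Lemma sum_ind_nat (k r : nat) :
  \sum_(0 <= i < r) ((k == i)%:R : Qq) = (k < r)%N%:R.
Proof.
elim: r => [|r IH]; first by rewrite big_geq.
rewrite big_nat_recr //= IH [in RHS]ltnS [in RHS]leq_eqVlt.
by case: (ltngtP k r) => h; rewrite /= ?addr0 ?add0r.
Qed.

Lemma Gm_sum (x : P) : \sum_(0 <= j < Hh.+1) Gm x j = (x == (\bot)%O)%:R.
Proof.
case: (eqVneq x (\bot)%O) => [->|xb].
  rewrite big_ltn // Gm_bot !eqxx big1_seq ?addr0 // => j.
  by move=> /andP [_]; rewrite mem_index_iota => /andP [h _]; rewrite Gm_bot; case: j h.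
have hr : (rk x < Hh.+1)%N by rewrite ltnS rk_top.
rewrite (big_cat_nat (n := (rk x).+1)) //= [X in _ + X]big1_seq ?addr0; last first.
  by move=> j /andP [_]; rewrite mem_index_iota => /andP [h _]; rewrite Gm_big.
rewrite big_nat_recr //= Gm_eq // ltnn eqxx.
rewrite (eq_big_nat _ _ (F2 := Af x)); first by rewrite subrr.
by move=> j /andP [_ hj]; rewrite Gm_eq // hj.
Qed.

Definition vv (x : P) (j : nat) : rat :=
  \sum_(p : P | (p <= x)%O && (rk p == j)) (M p)%:~R.

Lemma vv_big (x : P) j : (rk x < j)%N -> vv x j = 0.
Proof.
move=> hj; rewrite /vv big1 // => p /andP [px /eqP hp].
by move: (rk_le px); rewrite hp leqNgt hj.
Qed.

Lemma vv_self (y : P) : vv y (rk y) = (M y)%:~R.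
Proof.
rewrite /vv (bigD1 y) ?lexx ?eqxx //= big1 ?addr0 // => p /andP [/andP [py /eqP hp] ny].
have : (p < y)%O by rewrite lt_neqAle ny py.
by move/rk_lt; rewrite hp ltnn.
Qed.

Lemma vv_shift (x : P) i : (i < rk x)%N ->
  \sum_(y : P | (y < x)%O) (((rk y - i)%N == 0%N)%:R * vv y i) = vv x i.
Proof.
move=> hi.
transitivity (\sum_(y : P | (y < x)%O && (rk y == i)) (M y)%:~R : rat).
  rewrite big_mkcondr /=; apply: eq_bigr => y _.
  rewrite subn_eq0; case: (ltngtP (rk y) i) => h.
  - by rewrite vv_big // mulr0.
  - by rewrite mul0r.
  - by rewrite -h vv_self mul1r.
apply: eq_bigl => p; rewrite lt_neqAle -andbA; case: (eqVneq p x) => [->|] //=.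
by rewrite eq_sym (ltn_eqF hi) andbF.
Qed.

Lemma loc_Af_aux (x : P) i : x != (\bot)%O -> (i < rk x)%N ->
  (forall y, (y < x)%O -> value_at_q0 (Gm y i) (vv y i)) ->
  value_at_q0 (Af x i) (vv x i).
Proof.
move=> xb hi IH; rewrite /Af -[vv x i]mulr1.
apply: loc_mul; last by apply: loc_unit; rewrite subn_gt0.
rewrite -vv_shift //; apply: loc_sum => y yx.
exact: loc_mul (loc_qX _) (IH y yx).
Qed.

Lemma sum_ind_rat (k r : nat) :
  \sum_(0 <= i < r) ((k == i)%:R : rat) = (k < r)%N%:R.
Proof.
elim: r => [|r IH]; first by rewrite big_geq.
rewrite big_nat_recr //= IH [in RHS]ltnS [in RHS]leq_eqVlt.
by case: (ltngtP k r) => h; rewrite /= ?addr0 ?add0r.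
Qed.

Lemma vv_top_sum (x : P) : x != (\bot)%O ->
  - \sum_(0 <= i < rk x) vv x i = vv x (rk x).
Proof.
move=> xb; rewrite vv_self mob_rec // rmorphN /= rmorph_sum /=; congr (- _).
rewrite /vv.
transitivity (\sum_(0 <= i < rk x) \sum_(p : P | (p <= x)%O) ((rk p == i)%:R * (M p)%:~R) : rat).
  apply: eq_bigr => i _; rewrite big_mkcondr /=; apply: eq_bigr => p _.
  by case: (rk p == i); rewrite ?mul1r ?mul0r.
rewrite exchange_big /= [LHS]big_mkcond [RHS]big_mkcond /=; apply: eq_bigr => p _.
case: (boolP (p <= x)%O) => hpx.
  rewrite -mulr_suml sum_ind_rat; case: (eqVneq p x) => [->|px].
    by rewrite ltnn mul0r ltxx.
  have hlt : (p < x)%O by rewrite lt_neqAle px hpx.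
  by rewrite (rk_lt hlt) hlt mul1r.
by case: ifP => // /ltW; rewrite (negbTE hpx).
Qed.

Lemma vv_bot j : vv (\bot)%O j = (j == 0%N)%:R.
Proof.
rewrite /vv; case: (eqVneq j 0%N) => [->|hj].
  rewrite (bigD1 (\bot)%O) ?le0x ?rk_bot //= big1 ?addr0 ?mob_bot //.
  by move=> p /andP [/andP [pb _] np]; rewrite lex0 in pb; rewrite pb in np.
rewrite big1 // => p /andP [pb /eqP hp]; rewrite lex0 in pb.
by move: hp; rewrite (eqP pb) rk_bot => /esym /eqP; rewrite (negbTE hj).
Qed.

Lemma loc_Gm_aux n : forall x : P, (rk x < n)%N -> forall j, value_at_q0 (Gm x j) (vv x j).
Proof.
elim: n => [//|n IH] x hx j.
case: (eqVneq x (\bot)%O) => [->|xb].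
  by rewrite Gm_bot vv_bot; apply: loc_nat.
have IHx : forall i y, (y < x)%O -> value_at_q0 (Gm y i) (vv y i).
  by move=> i y yx; apply: IH; apply: leq_trans (rk_lt yx) _; rewrite -ltnS.
rewrite Gm_eq //; case: (ltngtP j (rk x)) => hj.
- exact: (loc_Af_aux x xb hj (IHx j)).
- by rewrite vv_big //; have := loc_nat 0.
- rewrite hj -vv_top_sum //; apply: loc_opp.
  rewrite big_seq [X in value_at_q0 _ X]big_seq; apply: loc_sum => i.
  rewrite mem_index_iota => /andP [_ hi].
  exact: (loc_Af_aux x xb hi (IHx i)).
Qed.

Lemma loc_Gm (x : P) j : value_at_q0 (Gm x j) (vv x j).
Proof. exact: (@loc_Gm_aux (rk x).+1 x (ltnSn _) j). Qed.

Definition ev (x : P) (t : Qq) : Qq := \sum_(0 <= j < Hh.+1) Gm x j * t ^+ j.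

Lemma ev_rec (x : P) t :
  ev x (qvar * t) = \sum_(y : P | (y <= x)%O) qvar ^+ rk y * ev y t.
Proof.
rewrite /ev.
transitivity (\sum_(0 <= j < Hh.+1) \sum_(y : P | (y <= x)%O) qvar ^+ rk y * Gm y j * t ^+ j).
  apply: eq_bigr => j _; rewrite exprMn mulrA [Gm x j * _]mulrC Gm_rec mulr_suml.
  by apply: eq_bigr => y _.
rewrite exchange_big /=; apply: eq_bigr => y _; rewrite mulr_sumr.
by apply: eq_bigr => j _; rewrite mulrA.
Qed.

Lemma ev_q (x : P) : ev x qvar = 1.
Proof.
rewrite -[qvar]mulr1 ev_rec (bigD1 (\bot)%O) ?le0x //= big1 ?addr0.
  by rewrite /ev rk_bot expr0 mul1r; under eq_bigr do rewrite expr1n mulr1; rewrite Gm_sum eqxx.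
move=> y /andP [_ yb]; rewrite /ev; under eq_bigr do rewrite expr1n mulr1.
by rewrite Gm_sum (negbTE yb) mulr0.
Qed.

Definition gg (x : P) (m : nat) : Qq :=
  \sum_(e : {ffun 'I_m -> P} | multichain e && [forall i, (e i <= x)%O])
     qvar ^+ (\sum_(i < m) rk (e i)).

Lemma gg0 (x : P) : gg x 0 = 1.
Proof.
rewrite /gg (eq_bigl xpredT); last first.
  move=> e; apply/andP; split; apply/forallP => -[] //.
rewrite (eq_bigr (fun _ => 1)); last by move=> e _; rewrite big_ord0 expr0.
by rewrite sumr_const card_ffun card_ord expn0.
Qed.

Definition ext m (y : P) (e : {ffun 'I_m -> P}) : {ffun 'I_m.+1 -> P} :=
  [ffun i => if unlift ord_max i is Some j then e j else y].

Lemma ext_lift m y (e : {ffun 'I_m -> P}) j : ext y e (lift ord_max j) = e j.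
Proof. by rewrite /ext ffunE liftK. Qed.

Lemma ext_max m y (e : {ffun 'I_m -> P}) : ext y e ord_max = y.
Proof. by rewrite /ext ffunE unlift_none. Qed.

Lemma mc_ext m (y x : P) (e : {ffun 'I_m -> P}) :
  (multichain (ext y e) && [forall i, (ext y e i <= x)%O]) =
  ((y <= x)%O && (multichain e && [forall i, (e i <= y)%O])).
Proof.
apply/idP/idP.
  move=> /andP [/forallP mc /forallP le].
  have ey : forall i, (e i <= y)%O.
    move=> i; have := mc (lift ord_max i) => /forallP /(_ ord_max) /implyP.
    by rewrite ext_lift ext_max; apply; rewrite lift_max /= ltnW.
  apply/and3P; split.
  - by have := le ord_max; rewrite ext_max.
  - apply/forallP => i; apply/forallP => j; apply/implyP => hij.
    have := mc (lift ord_max i) => /forallP /(_ (lift ord_max j)).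
    by rewrite !ext_lift !lift_max /=; move/implyP; apply.
  - by apply/forallP.
move=> /and3P [yx /forallP mc /forallP ey].
have eall : forall i, (ext y e i <= y)%O.
  by move=> i; case: (unliftP ord_max i) => [i'|] ->; rewrite ?ext_lift ?ext_max.
apply/andP; split; last by apply/forallP => i; apply: le_trans (eall i) yx.
apply/forallP => i; apply/forallP => j; apply/implyP => hij.
case: (unliftP ord_max j) hij => [j'|] -> hij; last by rewrite ext_max.
case: (unliftP ord_max i) hij => [i'|] -> hij.
  rewrite !ext_lift; move: (mc i') => /forallP /(_ j') /implyP; apply.
  by move: hij; rewrite !lift_max.
by move: hij; rewrite lift_max /= leqNgt ltn_ord.
Qed.

Lemma sum_ext m (y : P) (e : {ffun 'I_m -> P}) :
  (\sum_(i < m.+1) rk (ext y e i) = \sum_(i < m) rk (e i) + rk y)%N.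
Proof.
rewrite big_ord_recr /= ext_max; congr (_ + _)%N.
apply: eq_bigr => i _.
have -> : widen_ord (leqnSn m) i = lift ord_max i by apply: ord_inj; rewrite lift_max.
by rewrite ext_lift.
Qed.

Lemma gg_rec (x : P) m :
  gg x m.+1 = \sum_(y : P | (y <= x)%O) qvar ^+ rk y * gg y m.
Proof.
rewrite /gg.
pose h (p : P * {ffun 'I_m -> P}) := ext p.1 p.2.
have hb : bijective h.
  exists (fun e : {ffun 'I_m.+1 -> P} => (e ord_max, [ffun j => e (lift ord_max j)])).
    by case=> y e; rewrite /h /= ext_max; congr (_, _); apply/ffunP => j; rewrite ffunE ext_lift.
  move=> e; apply/ffunP => i; rewrite /h /=.
  by case: (unliftP ord_max i) => [i'|] ->; rewrite ?ext_lift ?ext_max ?ffunE.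
rewrite (reindex h); last exact: onW_bij.
rewrite /h /=.
under eq_bigl do rewrite mc_ext.
under eq_bigr do rewrite sum_ext addnC exprD.
rewrite -(pair_big_dep (fun y => (y <= x)%O) (fun y e => multichain e && [forall i, (e i <= y)%O])
   (fun y e => qvar ^+ rk y * qvar ^+ (\sum_(i < m) rk (e i)))) /=.
by apply: eq_bigr => y _; rewrite mulr_sumr.
Qed.

Lemma ev_gg (x : P) m : ev x (qvar ^+ m.+1) = gg x m.
Proof.
elim: m x => [|m IH] x; first by rewrite expr1 ev_q gg0.
rewrite exprS ev_rec gg_rec; apply: eq_bigr => y _; by rewrite IH.
Qed.

Definition locp (p : {poly Qq}) (p0 : {poly rat}) := forall i, value_at_q0 p`_i p0`_i.

Lemma locp_C c v : value_at_q0 c v -> locp c%:P v%:P.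
Proof.
move=> h i; rewrite !coefC; case: (i == 0%N) => //.
by have := loc_nat 0.
Qed.

Lemma locp_X : locp 'X 'X.
Proof. by move=> i; rewrite !coefX; apply: loc_nat. Qed.

Lemma locp_add p p0 p' p0' : locp p p0 -> locp p' p0' -> locp (p + p') (p0 + p0').
Proof. by move=> h h' i; rewrite !coefD; apply: loc_add. Qed.

Lemma locp_mul p p0 p' p0' : locp p p0 -> locp p' p0' -> locp (p * p') (p0 * p0').
Proof.
move=> h h' i; rewrite !coefM; apply: loc_sum => k _; exact: loc_mul.
Qed.

Lemma locp_exp p p0 n : locp p p0 -> locp (p ^+ n) (p0 ^+ n).
Proof.
move=> h; elim: n => [|n IH]; first by rewrite !expr0 -!polyC1; apply: locp_C; apply: loc_nat 1.
by rewrite !exprS; apply: locp_mul.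
Qed.

Lemma locp_sum (I : Type) (r : seq I) (F : I -> {poly Qq}) (G : I -> {poly rat}) :
  (forall i, locp (F i) (G i)) -> locp (\sum_(i <- r) F i) (\sum_(i <- r) G i).
Proof.
move=> h; elim: r => [|a r IH]; first by rewrite !big_nil; apply: (locp_C (loc_nat 0)).
by rewrite !big_cons; apply: locp_add.
Qed.

Definition Zm : {poly Qq} :=
  \sum_(0 <= j < Hh.+1) (Gm (\top)%O j)%:P * (1%:P + (qvar - 1)%:P * 'X) ^+ j.

Definition Z0 : {poly rat} :=
  \sum_(0 <= j < Hh.+1) (vv (\top)%O j)%:P * (1%:P + (-1)%:P * 'X) ^+ j.

Lemma locp_Zm : locp Zm Z0.
Proof.
apply: locp_sum => j; apply: locp_mul; first exact/locp_C/loc_Gm.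
apply: locp_exp; apply: locp_add; first exact: (locp_C (loc_nat 1)).
apply: locp_mul locp_X; apply: locp_C.
have := loc_add (loc_qX 1) (loc_opp (loc_nat 1)).
by rewrite /= add0r.
Qed.

Lemma qint_q n : 1 + (qvar - 1) * qint n = qvar ^+ n.
Proof. by rewrite /qint mulrC divfK ?q_neq1 // addrC subrK. Qed.

Lemma Zm_eval n : Zm.[qint n] = ev (\top)%O (qvar ^+ n).
Proof.
rewrite /Zm /ev horner_sum; apply: eq_bigr => j _.
by rewrite hornerM hornerC horner_exp hornerD hornerM !hornerC hornerX qint_q.
Qed.

Lemma Zm_qZeta : is_qZeta rk Zm.
Proof.
move=> n hn; rewrite Zm_eval.
have -> : n = (n.-1).+1 by rewrite prednK // ltnW.
rewrite ev_gg /gg /=; apply: eq_bigl => e; rewrite -[RHS]andbT; congr (_ && _).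
by apply/forallP => i; apply: lex1.
Qed.

Lemma qint_inj m n : qint m = qint n -> m = n.
Proof.
rewrite /qint => /(mulIf (invr_neq0 q_neq1)) /eqP; rewrite (can_eq (subrK 1)) => /eqP.
exact: qX_inj.
Qed.

Lemma qZeta_unique Z Z' : is_qZeta rk Z -> is_qZeta rk Z' -> Z = Z'.
Proof.
move=> h h'; apply/eqP; rewrite -subr_eq0; apply/negPn/negP => hp.
pose rs := [seq qint i.+2 | i <- iota 0 (size (Z - Z'))].
have hall : all (root (Z - Z')) rs.
  by apply/allP => x /mapP [i _ ->]; rewrite /root hornerD hornerN h // h' // subrr.
have huniq : uniq rs.
  by rewrite map_inj_uniq ?iota_uniq // => a b /qint_inj; case.
by have := max_poly_roots hp hall huniq; rewrite size_map size_iota ltnn.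
Qed.

Lemma Z0_eval (y : rat) : y != 0 ->
  Z0.[1 - y] = y ^+ (rk (\top)%O) * (charpoly_poset rk).[y^-1].
Proof.
move=> y0.
have h1 : Z0.[1 - y] = \sum_(0 <= j < Hh.+1) vv (\top)%O j * y ^+ j.
  rewrite /Z0 horner_sum; apply: eq_bigr => j _.
  rewrite hornerM hornerC horner_exp hornerD hornerM !hornerC hornerX.
  by rewrite mulN1r opprB addrC subrK.
rewrite h1 /charpoly_poset horner_sum mulr_sumr.
transitivity (\sum_(0 <= j < Hh.+1) \sum_(p : P) ((rk p == j)%:R * ((M p)%:~R * y ^+ rk p))).
  apply: eq_bigr => j _; rewrite /vv mulr_suml [RHS](bigID (fun p => (p <= \top)%O && (rk p == j))) /=.
  rewrite [X in _ = _ + X]big1 ?addr0; last first.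
    by move=> p; rewrite lex1 /= => /negbTE ->; rewrite mul0r.
  by apply: eq_bigr => p /andP [_ /eqP <-]; rewrite eqxx mul1r.
rewrite exchange_big /=; apply: eq_bigr => p _.
rewrite -mulr_suml sum_ind_rat ltnS rk_top mul1r hornerZ hornerXn.
have e : y ^+ rk (\top)%O = y ^+ rk p * y ^+ (rk (\top)%O - rk p).
  by rewrite -exprD subnKC // rk_top.
have hB : y ^+ (rk (\top)%O - rk p) != 0 by rewrite expf_neq0.
rewrite e exprVn /M -mulrA [y ^+ rk p * _]mulrC; congr (_ * _).
by rewrite mulrCA mulfV // mulr1.
Qed.

Lemma main_sec :
  (exists Z : {poly Qq}, is_qZeta rk Z) /\
  forall Z : {poly Qq}, is_qZeta rk Z ->
    (forall i : nat, no_pole_at_q0 Z`_i) /\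
    exists Z0 : {poly rat},
      (forall i : nat, value_at_q0 Z`_i Z0`_i) /\
      (forall y : rat, y != 0 ->
         Z0.[1 - y] = y ^+ (rk (\top)%O) * (charpoly_poset rk).[y^-1]).
Proof.
split; first by exists Zm; exact: Zm_qZeta.
move=> Z hZ; have -> := qZeta_unique hZ Zm_qZeta.
split; first by move=> i; exists Z0`_i; exact: locp_Zm.
by exists Z0; split; [exact: locp_Zm | exact: Z0_eval].
Qed.
End Poset.

Unset Implicit Arguments.

Theorem mainTheorem1 (d : Order.disp_t) (P : finTBPOrderType d)
  (rk : P -> nat) (hrk : is_rank_function rk) :
  (exists Z : {poly Qq}, is_qZeta rk Z) /\
  forall Z : {poly Qq}, is_qZeta rk Z ->
    (forall i : nat, no_pole_at_q0 Z`_i) /\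
    exists Z0 : {poly rat},
      (forall i : nat, value_at_q0 Z`_i Z0`_i) /\
      (forall y : rat, y != 0 ->
         Z0.[1 - y] = y ^+ (rk (\top)%O) * (charpoly_poset rk).[y^-1]).
Proof.
exact: (main_sec hrk).
Qed.
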